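(* Let $n,T\in\mathbb{N}$ and let real numbers $r_{it}$, $i\in\{1,\ldots,n\}$, $t\in\{1,\ldots,T\}$, be given. Consider the random return vector $\boldsymbol{r}=(r_1,\ldots,r_n)^{\mathsf T}$ which takes the value $(r_{1t},\ldots,r_{nt})^{\mathsf T}$ in scenario $t$, each scenario $t\in\{1,\ldots,T\}$ having probability $1/T$, and let $\mu_i=\frac1T\sum_{t=1}^T r_{it}$, $\boldsymbol{\mu}=(\mu_1,\ldots,\mu_n)^{\mathsf T}$. Define the convex function $\mathrm{MAD}:\mathbb{R}^n\to\mathbb{R}$ by $$\mathrm{MAD}(\boldsymbol{x})=\mathbb{E}\big[|(\boldsymbol{r}-\boldsymbol{\mu})^{\mathsf T}\boldsymbol{x}|\big]=\frac1T\sum_{t=1}^T\Big|\sum_{i=1}^n (r_{it}-\mu_i)x_i\Big|,$$ and let $\partial\mathrm{MAD}(\boldsymbol{x})$ denote its (convex-analysis) subdifferential at $\boldsymbol{x}$. Let $\Delta^{n-1}=\{\boldsymbol{x}\in\mathbb{R}^n: x_i\ge0\ \forall i,\ \sum_i x_i=1\}$. Call $\boldsymbol{x}\in\Delta^{n-1}$ a MAD-RP portfolio if there exist $\boldsymbol{s}\in\partial\mathrm{MAD}(\boldsymbol{x})$ and $\lambda\in\mathbb{R}$ such that $x_i s_i=\lambda$ for all $i\in\{1,\ldots,n\}$ (i.e. there is a vector in $\{\boldsymbol{x}\cdot\boldsymbol{s}:\boldsymbol{s}\in\partial\mathrm{MAD}(\boldsymbol{x})\}$, $\cdot$ the componentwise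 product, all of whose components are equal). Suppose that the only vector $\boldsymbol{x}\in\mathbb{R}^n_+$ such that $(\boldsymbol{r}-\boldsymbol{\mu})^{\mathsf T}\boldsymbol{x}=0$ holds almost surely (i.e. $\sum_{i}(r_{it}-\mu_i)x_i=0$ for every $t$) is $\boldsymbol{x}=0$. Then there exists a unique MAD-RP portfolio.
   Context: $\mathbb{R}^n_+$ denotes the set of vectors in $\mathbb{R}^n$ with all components nonnegative. *)

(* Defs.v *)
From HB Require Import structures.
From mathcomp Require Import all_boot all_order all_algebra.
From mathcomp Require Import reals.
Set Implicit Arguments. Unset Strict Implicit. Unset Printing Implicit Defensive.
Import Order.TTheory GRing.Theory Num.Theory.
Local Open Scope ring_scope.

Section MAD.
Variables (R : realType) (n T : nat) (r : 'I_n -> 'I_T -> R).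

Definition mu (i : 'I_n) : R := (T%:R)^-1 * \sum_(t < T) r i t.

Definition MAD (x : 'I_n -> R) : R :=
  (T%:R)^-1 * \sum_(t < T) `| \sum_(i < n) (r i t - mu i) * x i |.

Definition subgradient (f : ('I_n -> R) -> R) (x s : 'I_n -> R) : Prop :=
  forall y : 'I_n -> R, f x + \sum_(i < n) s i * (y i - x i) <= f y.

Definition in_simplex (x : 'I_n -> R) : Prop :=
  (forall i, 0 <= x i) /\ \sum_(i < n) x i = 1.

Definition MAD_RP (x : 'I_n -> R) : Prop :=
  in_simplex x /\
  exists (s : 'I_n -> R) (lam : R), subgradient MAD x s /\ forall i, x i * s i = lam.

End MAD.

(* Main.v *)
Require Import Defs.
From HB Require Import structures.
From mathcomp Require Import all_boot all_order all_algebra.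
From mathcomp Require Import reals.
From mathcomp Require Import all_classical all_reals all_analysis.
From mathcomp Require Import ring lra.
Import Order.TTheory GRing.Theory Num.Theory.
Import numFieldNormedType.Exports.
Local Open Scope ring_scope.
Section PartA.
Variables (R : realType) (n T : nat) (r : 'I_n -> 'I_T -> R).

Lemma MAD_ge0 x : 0 <= MAD r x.
Proof. by rewrite /MAD mulr_ge0 ?invr_ge0 ?ler0n ?sumr_ge0. Qed.

Lemma MAD_scale c x : 0 <= c -> MAD r (fun i => c * x i) = c * MAD r x.
Proof.
move=> c0; rewrite /MAD [RHS]mulrCA [in RHS]mulr_sumr; congr (_ * _); apply: eq_bigr => t _.
rewrite -(ger0_norm c0) -normrM mulr_sumr; congr `|_|; apply: eq_bigr => i _.
by rewrite ger0_norm // mulrCA.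
Qed.

Lemma MAD_opp x : MAD r (fun i => - x i) = MAD r x.
Proof.
rewrite /MAD; congr (_ * _); apply: eq_bigr => t _.
rewrite -normrN -sumrN; congr `|_|; apply: eq_bigr => i _; by rewrite mulrN opprK.
Qed.

Lemma MAD_add x y : MAD r (fun i => x i + y i) <= MAD r x + MAD r y.
Proof.
rewrite /MAD -mulrDr ler_wpM2l ?invr_ge0 ?ler0n // -big_split /=.
apply: ler_sum => t _; rewrite (le_trans _ (ler_normD _ _)) // -big_split /=.
by rewrite le_eqVlt; apply/orP; left;
  apply/eqP; congr `|_|; apply: eq_bigr => i _; rewrite mulrDr.
Qed.

Lemma MAD0 : MAD r (fun _ => 0) = 0.
Proof.
rewrite /MAD big1 ?mulr0 // => t _; rewrite big1 ?normr0 // => i _; exact: mulr0.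
Qed.

Lemma MAD_conv (x z : 'I_n -> R) (t : R) : 0 <= t <= 1 ->
  MAD r (fun i => (1 - t) * x i + t * z i) <= (1 - t) * MAD r x + t * MAD r z.
Proof.
move=> /andP[t0 t1].
apply: (le_trans (MAD_add (fun i => (1-t)*x i) (fun i => t*z i))).
by rewrite !MAD_scale ?subr_ge0.
Qed.

End PartA.
Section PartB.
Variables (R : realType) (n T : nat) (r : 'I_n -> 'I_T -> R).
Hypothesis n0 : (0 < n)%N.
Hypothesis T0 : (0 < T)%N.
Hypothesis hyp : forall x : 'I_n -> R, (forall i, 0 <= x i) ->
     (forall t : 'I_T, \sum_(i < n) (r i t - mu r i) * x i = 0) ->
     forall i, x i = 0.

Lemma MAD_eq0 x : (forall i, 0 <= x i) -> MAD r x = 0 -> forall i, x i = 0.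
Proof.
move=> x0 /eqP; rewrite /MAD mulf_eq0 invr_eq0 pnatr_eq0 (gtn_eqF T0) /= => /eqP.
move=> /psumr_eq0P H; apply: hyp => // t; apply/eqP; rewrite -normr_eq0; apply/eqP; exact: H.
Qed.

Lemma sum_const_n (c : R) : \sum_(i < n) c = c * n%:R.
Proof. by rewrite sumr_const card_ord mulr_natr. Qed.

Lemma RP_props x : MAD_RP r x -> exists lam, 0 < lam /\ (forall i, 0 < x i) /\
  exists s : 'I_n -> R, (forall i, x i * s i = lam) /\
    (forall z, \sum_i s i * z i <= MAD r z) /\ MAD r x = lam * n%:R.
Proof.
move=> [[x0 x1] [s [lam [sg xs]]]].
have sx : \sum_i s i * x i = lam * n%:R.
  by rewrite -sum_const_n; apply: eq_bigr => i _; rewrite mulrC xs.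
have h1 := sg (fun _ => 0); rewrite MAD0 in h1.
have h2 := sg (fun i => 2 * x i); rewrite MAD_scale // in h2.
have e1 : \sum_i s i * (0 - x i) = - (lam * n%:R).
  by rewrite -sx -sumrN; apply: eq_bigr => i _; rewrite sub0r mulrN.
have e2 : \sum_i s i * (2 * x i - x i) = lam * n%:R.
  by rewrite -sx; apply: eq_bigr => i _; congr (_ * _); lra.
rewrite e1 in h1; rewrite e2 in h2.
have Mx : MAD r x = lam * n%:R by lra.
have Mpos : 0 < MAD r x.
  rewrite lt_def MAD_ge0 andbT; apply/eqP => /MAD_eq0 => /(_ x0) H.
  by move: x1; rewrite big1 // => /eqP; rewrite eq_sym oner_eq0.
have lam0 : 0 < lam.
  by move: Mpos; rewrite Mx pmulr_lgt0 // ltr0n.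
exists lam; split => //; split.
  move=> i; rewrite lt_def x0 andbT; apply/eqP => xi0.
  by move: (xs i); rewrite xi0 mul0r => lam0'; move: lam0; rewrite -lam0' ltxx.
exists s; split => //; split => // z.
have := sg z.
have -> : \sum_i s i * (z i - x i) = \sum_i s i * z i - lam * n%:R.
  by rewrite -sx -sumrB; apply: eq_bigr => i _; rewrite mulrBr.
lra.
Qed.

Lemma RP_unique x x' : MAD_RP r x -> MAD_RP r x' -> forall i, x' i = x i.
Proof.
move=> Hx Hx'; have [[_ sx1] _] := Hx; have [[_ sx1'] _] := Hx'.
move: Hx Hx' => /RP_props [l [l0 [xp [s [xs [sz Mx]]]]]].
move=> /RP_props [l' [l0' [xp' [s' [xs' [sz' Mx']]]]]].
have A1 : \sum_i s i * x' i <= l' * n%:R by rewrite -Mx'; exact: sz.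
have A2 : \sum_i s' i * x i <= l * n%:R by rewrite -Mx; exact: sz'.
pose a i := s i * x' i / l'.
pose b i := s' i * x i / l.
have ab i : a i * b i = 1.
  have -> : a i * b i = (x i * s i) * (x' i * s' i) / (l * l').
    rewrite /a /b; field; rewrite ?gt_eqF //.
  by rewrite xs xs' divff // mulf_neq0 // gt_eqF.
have a0 i : 0 < a i.
  rewrite /a divr_gt0 // mulr_gt0 //.
  by have := xs i; move=> h; move: l0; rewrite -h pmulr_rgt0.
have S : \sum_i (a i + b i - 2) <= 0.
  rewrite sumrB big_split /= sum_const_n.
  have -> : \sum_i a i = (\sum_i s i * x' i) / l' by rewrite mulr_suml.
  have -> : \sum_i b i = (\sum_i s' i * x i) / l by rewrite mulr_suml.
  rewrite subr_le0.
  have h1 : (\sum_i s i * x' i) / l' <= n%:R.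
    by rewrite ler_pdivrMr // mulrC.
  have h2 : (\sum_i s' i * x i) / l <= n%:R.
    by rewrite ler_pdivrMr // mulrC.
  lra.
have T1 i : 0 <= a i + b i - 2.
  have e : (a i - 1) ^+ 2 = a i * (a i + b i - 2).
    rewrite expr2; have h := ab i; nra.
  by rewrite -(pmulr_rge0 _ (a0 i)) -e sqr_ge0.
have Z i : a i = 1.
  have /psumr_eq0P H : \sum_i (a i + b i - 2) = 0.
    by apply/eqP; rewrite eq_le S sumr_ge0.
  have := H (fun j _ => T1 j) i isT => h.
  have e : (a i - 1) ^+ 2 = 0.
    rewrite expr2; have h' := ab i; nra.
  by move/eqP: e; rewrite sqrf_eq0 subr_eq0 => /eqP.
have E i : l * x' i = l' * x i.
  have h : s i * x' i = l'.
    by move: (Z i); rewrite /a => h; rewrite -[l']mul1r -h mulfVK ?gt_eqF.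
  by rewrite -(xs i) -mulrA h mulrC.
have ll : l = l'.
  have : \sum_i l * x' i = \sum_i l' * x i by apply: eq_bigr => i _; exact: E.
  by rewrite -!mulr_sumr sx1 sx1' !mulr1.
move=> i; apply: (@mulfI _ l); first by rewrite gt_eqF.
by rewrite E ll.
Qed.
End PartB.
Section PartC.
Variables (R : realType) (n T : nat) (r : 'I_n -> 'I_T -> R).
Hypothesis n0 : (0 < n)%N.

Lemma RP_from_y (y : 'I_n -> R) : (forall i, 0 < y i) ->
  (forall z, MAD r y + \sum_i (y i)^-1 * (z i - y i) <= MAD r z) ->
  exists x, MAD_RP r x.
Proof.
move=> y0 key.
have sc : forall c : R, \sum_(i < n) c = c * n%:R.
  by move=> c; rewrite sumr_const card_ord mulr_natr.
have sz z : \sum_i (y i)^-1 * (z i - y i) = \sum_i (y i)^-1 * z i - n%:R.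
  rewrite -[n%:R]mul1r -sc -sumrB; apply: eq_bigr => i _.
  by rewrite mulrBr mulVf // gt_eqF.
have h1 := key (fun _ => 0); rewrite MAD0 sz in h1.
have h2 := key (fun i => 2 * y i); rewrite MAD_scale // sz in h2.
have e0 : \sum_i (y i)^-1 * 0 = 0 by rewrite big1 // => i _; rewrite mulr0.
have e2 : \sum_i (y i)^-1 * (2 * y i) = 2 * n%:R.
  rewrite -sc; apply: eq_bigr => i _; rewrite mulrCA mulVf ?mulr1 // gt_eqF //.
rewrite e0 in h1; rewrite e2 in h2.
have My : MAD r y = n%:R by lra.
pose S := \sum_i y i.
have S0 : 0 < S.
  rewrite /S (bigD1 (Ordinal n0)) //= ltr_pwDl ?y0 // sumr_ge0 // => i _; exact: ltW.
exists (fun i => S^-1 * y i); split.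
  split; first by move=> i; rewrite mulr_ge0 ?invr_ge0 ?ltW.
  by rewrite -mulr_sumr mulVf // gt_eqF.
exists (fun i => (y i)^-1), S^-1; split; last first.
  by move=> i; rewrite -mulrA mulfV ?mulr1 // gt_eqF.
move=> z; rewrite MAD_scale; last by rewrite invr_ge0 ltW.
rewrite My.
have := key z; rewrite sz My.
have -> : \sum_i (y i)^-1 * (z i - S^-1 * y i) = \sum_i (y i)^-1 * z i - S^-1 * n%:R.
  rewrite -sc -sumrB; apply: eq_bigr => i _.
  by rewrite mulrBr mulrCA mulVf ?mulr1 // gt_eqF.
move=> ?; lra.
Qed.
End PartC.
Section PartD.
Variables (R : realType) (n T : nat) (r : 'I_n -> 'I_T -> R).

Definition Fb (w : 'I_n -> R) := MAD r w - \sum_i ln (w i).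

Lemma ln_step (y w u : R) : 0 < y -> w = y + u -> y / 2 <= w ->
  u / y - 2 * u ^+ 2 / y ^+ 2 <= ln w - ln y.
Proof.
move=> y0 wE w2.
have w0 : 0 < w by apply: lt_le_trans w2; rewrite divr_gt0.
have L : ln (y / w) <= y / w - 1.
  have := @le_ln1Dx R (y / w - 1); rewrite addrCA subrr addr0; apply.
  have : 0 < y / w by rewrite divr_gt0.
  move=> ?; lra.
rewrite ln_div ?posrE // in L.
have E : 1 - y / w - (u / y - 2 * u ^+ 2 / y ^+ 2) = u ^+ 2 * (2 * w - y) / (w * y ^+ 2).
  rewrite wE; field; rewrite -?wE ?gt_eqF //.
have : 0 <= u ^+ 2 * (2 * w - y) / (w * y ^+ 2).
  apply: divr_ge0; [apply: mulr_ge0; [exact: sqr_ge0 | lra] |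
    apply: mulr_ge0; [exact: ltW | exact: sqr_ge0]].
rewrite -E; lra.
Qed.


Lemma variational (y : 'I_n -> R) : (forall i, 0 < y i) ->
  (forall w, (forall i, 0 < w i) -> Fb y <= Fb w) ->
  forall z, MAD r y + \sum_i (y i)^-1 * (z i - y i) <= MAD r z.
Proof.
move=> y0 ymin z.
pose d i := z i - y i.
pose G := \sum_i (y i)^-1 * d i.
pose C := \sum_i 2 * d i ^+ 2 / y i ^+ 2.
pose K := \sum_i `|d i| / y i.
pose t0 := (2 * (1 + K))^-1.
have C0 : 0 <= C.
  apply: sumr_ge0 => i _; apply: divr_ge0; first by apply: mulr_ge0 => //; exact: sqr_ge0.
  by apply: exprn_ge0; exact: ltW.
have K0 : 0 <= K.
  by apply: sumr_ge0 => i _; rewrite divr_ge0 // ltW.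
have t00 : 0 < t0 by rewrite invr_gt0; lra.
have t0E : t0 * (2 * (1 + K)) = 1 by rewrite mulVf //; apply: lt0r_neq0; lra.
have t0K : t0 * K <= 1 / 2 by lra.
have t0h : t0 <= 1 / 2 by nra.
have main t : 0 < t -> t <= t0 -> MAD r y + G <= MAD r z + t * C.
  move=> tp tt0.
  pose w i := y i + t * d i.
  have wy i : y i / 2 <= w i.
    have hk : `|d i| / y i <= K.
      rewrite /K (bigD1 i) //= lerDl; apply: sumr_ge0 => j _.
      by rewrite divr_ge0 // ltW.
    have hk' : `|d i| <= K * y i by rewrite -ler_pdivrMr.
    have a : t * `|d i| <= t0 * (K * y i).
      apply: ler_pM => //; try exact: ltW; exact: normr_ge0.
    have b : t0 * (K * y i) <= y i / 2.
      rewrite mulrA; have := y0 i => yp.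
      have : 0 <= (1/2 - t0 * K) * y i by apply: mulr_ge0; lra.
      lra.
    have c : - (t * `|d i|) <= t * d i.
      by rewrite -mulrN; apply: ler_wpM2l; [exact: ltW | rewrite lerNl -normrN; exact: ler_norm].
    rewrite /w; lra.
  have wpos i : 0 < w i.
    by apply: lt_le_trans (wy i); rewrite divr_gt0.
  have Fyw := ymin w wpos; rewrite /Fb in Fyw.
  have conv : MAD r w <= (1 - t) * MAD r y + t * MAD r z.
    have -> : w = (fun i => (1 - t) * y i + t * z i).
      by apply: funext => i; rewrite /w /d; ring.
    apply: MAD_conv; apply/andP; split; lra.
  have lnsum : t * G - t ^+ 2 * C <= \sum_i (ln (w i) - ln (y i)).
    have -> : t * G - t ^+ 2 * C =
        \sum_i ((t * d i) / y i - 2 * (t * d i) ^+ 2 / y i ^+ 2).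
      rewrite /G /C !mulr_sumr -sumrB; apply: eq_bigr => i _.
      by field; rewrite gt_eqF.
    by apply: ler_sum => i _; apply: ln_step.
  rewrite sumrB in lnsum.
  have : t * (MAD r y + G - MAD r z - t * C) <= 0.
    rewrite expr2 in lnsum; lra.
  rewrite pmulr_rle0 // => h; lra.
apply/ler_addgt0Pr => e e0.
pose t := Num.min t0 (e / (C + 1)).
have tp : 0 < t by rewrite lt_min t00 divr_gt0 //; lra.
have tt0 : t <= t0 by rewrite ge_min lexx.
have te : t * (C + 1) <= e.
  by rewrite -ler_pdivlMr; [rewrite ge_min lexx orbT | lra].
have := main t tp tt0.
have -> : \sum_i (y i)^-1 * (z i - y i) = G by [].
nra.
Qed.

End PartD.
Section PartE.
Local Open Scope classical_set_scope.
Variables (R : realType) (n T : nat) (r : 'I_n -> 'I_T -> R).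

Lemma cont_sumS (X : topologicalType) (I : Type) (s : seq I) (F : I -> X -> R) x :
  (forall i, {for x, continuous (F i)}) ->
  {for x, continuous (fun v => \sum_(i <- s) F i v)}.
Proof.
move=> Fc; elim: s => [|a s IH].
  have -> : (fun v => \sum_(i <- [::]) F i v) = (fun _ => 0).
    by apply: funext => v; rewrite big_nil.
  exact: cst_continuous.
have -> : (fun v => \sum_(i <- a :: s) F i v) = (F a + (fun v => \sum_(i <- s) F i v)).
  by apply: funext => v; rewrite big_cons.
exact: continuousD.
Qed.

Lemma cont_cM (X : topologicalType) (c : R) (f : X -> R) x :
  {for x, continuous f} -> {for x, continuous (fun v => c * f v)}.
Proof.
move=> fc; have -> : (fun v => c * f v) = ((fun _ => c) \* f) by [].
by apply: continuousM => //; exact: cst_continuous.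
Qed.

Lemma cont_MAD (x : 'rV[R]_n) :
  {for x, continuous (fun v : 'rV[R]_n => MAD r (fun i => v ord0 i))}.
Proof.
rewrite /MAD; apply: cont_cM; apply: cont_sumS => t.
apply: (@continuous_comp _ _ _ (fun v : 'rV[R]_n => \sum_i (r i t - mu r i) * v ord0 i) Num.norm x); last exact: norm_continuous.
apply: cont_sumS => i; apply: cont_cM; exact: coord_continuous.
Qed.

End PartE.
Section PartF.
Local Open Scope classical_set_scope.
Variables (R : realType) (n T : nat) (r : 'I_n -> 'I_T -> R).
Hypothesis n0 : (0 < n)%N.
Hypothesis T0 : (0 < T)%N.
Hypothesis hyp : forall x : 'I_n -> R, (forall i, 0 <= x i) ->
     (forall t : 'I_T, \sum_(i < n) (r i t - mu r i) * x i = 0) ->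
     forall i, x i = 0.

Lemma le_sum_single (y : 'I_n -> R) i : (forall j, 0 <= y j) -> y i <= \sum_j y j.
Proof. by move=> y0; rewrite (bigD1 i) //= lerDl sumr_ge0. Qed.

Lemma MAD_lb : exists2 m, 0 < m &
  forall y, (forall i, 0 <= y i) -> m * \sum_i y i <= MAD r y.
Proof.
pose B := [set v : 'rV[R]_n | forall i, (fun _ : 'I_n => `[(0:R), 1]%classic) i (v ord0 i)].
pose C := [set v : 'rV[R]_n | \sum_i v ord0 i = 1].
have cB : compact B by apply: rV_compact => i; exact: segment_compact.
have clC : closed C.
  have -> : C = (fun v : 'rV[R]_n => \sum_i v ord0 i) @^-1` [set x | x = 1] by [].
  apply: preimage_closed; last exact: closed_eq.
  move=> v _; apply: cont_sumS => i.
  exact: coord_continuous.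
have cA : compact (B `&` C) by exact: compact_closedI.
have A0 : (B `&` C) !=set0.
  exists (\row_i (n%:R)^-1); split.
    move=> i /=; rewrite mxE in_itv /= invr_ge0 ler0n /= invf_le1 ?ltr0n //.
    by rewrite ler1n.
  rewrite /C /=; under eq_bigr do rewrite mxE.
  by rewrite sumr_const card_ord -[_ *+ n]mulr_natr mulVf // pnatr_eq0 (gtn_eqF n0).
have [c cA' cmin] := compact_EVT_min A0 cA (continuous_subspaceT (fun v => @cont_MAD R n T r v)).
move: cA'; rewrite inE => -[cB' cC'].
exists (MAD r (fun i => c ord0 i)).
  rewrite lt_def MAD_ge0 andbT; apply/eqP => /(@MAD_eq0 R n T r T0 hyp) H.
  have : \sum_i c ord0 i = 0.
    by apply: big1 => i _; apply: H => j; move: (cB' j); rewrite /= in_itv /= => /andP[].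
  by rewrite cC' => /eqP; rewrite oner_eq0.
move=> y y0.
have [S0|Spos] := eqVneq (\sum_i y i) 0.
  by rewrite S0 mulr0 MAD_ge0.
have Sp : 0 < \sum_i y i by rewrite lt_def Spos sumr_ge0.
pose S := \sum_i y i.
have := cmin (\row_i (S^-1 * y i)).
have -> : (fun i => (\row_i0 (S^-1 * y i0)) ord0 i) = (fun i => S^-1 * y i).
  by apply: funext => i; rewrite mxE.
rewrite MAD_scale; last by rewrite invr_ge0 ltW.
move=> h.
have h' : MAD r (fun i => c ord0 i) <= S^-1 * MAD r y.
  apply: h; rewrite inE; split.
    move=> i /=; rewrite mxE in_itv /= mulr_ge0 ?invr_ge0 ?y0 ?(ltW Sp) //=.
    by rewrite mulrC ler_pdivrMr // mul1r le_sum_single.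
  rewrite /C /=; under eq_bigr do rewrite mxE.
  by rewrite -mulr_sumr mulVf // gt_eqF.
apply: le_trans (ler_wpM2r (ltW Sp) h') _.
have -> : S^-1 * MAD r y * \sum_i y i = MAD r y by rewrite /S; field; rewrite gt_eqF.
by [].
Qed.
End PartF.
Section PartG.
Local Open Scope classical_set_scope.
Variables (R : realType) (n T : nat) (r : 'I_n -> 'I_T -> R).
Hypothesis n0 : (0 < n)%N.
Hypothesis T0 : (0 < T)%N.
Hypothesis hyp : forall x : 'I_n -> R, (forall i, 0 <= x i) ->
     (forall t : 'I_T, \sum_(i < n) (r i t - mu r i) * x i = 0) ->
     forall i, x i = 0.

Lemma ln_le_lin (a u : R) : 0 < a -> 0 < u -> ln u <= a * u - 1 - ln a.
Proof.
move=> a0 u0.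
have := @le_ln1Dx R (a * u - 1).
have -> : 1 + (a * u - 1) = a * u by ring.
rewrite lnM ?posrE //.
have : 0 < a * u by rewrite mulr_gt0.
move=> h1 h2; have := h2 ltac:(lra); lra.
Qed.

Lemma bounds (m B u : R) : 0 < m -> 0 < u -> m * u - ln u <= B ->
  expR (- B) <= u <= 2 / m * (B - 1 - ln (m / 2)).
Proof.
move=> m0 u0 h; apply/andP; split.
  have h1 := @ln_le_lin m u m0 u0.
  have : - B <= ln u.
    have : 0 <= m * u by rewrite mulr_ge0 // ltW.
    lra.
  by move=> hB; rewrite -[u in _ <= u]lnK ?posrE // ler_expR.
have m2 : 0 < m / 2 by rewrite divr_gt0.
have h3 := @ln_le_lin (m / 2) u m2 u0.
have : m / 2 * u <= B - 1 - ln (m / 2) by lra.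
move=> h2.
have -> : u = 2 / m * (m / 2 * u) by field; rewrite gt_eqF.
by apply: ler_wpM2l => //; rewrite divr_ge0 // ltW.
Qed.


Local Notation F := (@Fb R n T r).

Lemma exists_min : exists y : 'I_n -> R, (forall i, 0 < y i) /\
  forall w, (forall i, 0 < w i) -> F y <= F w.
Proof.
have [m m0 mlb] := @MAD_lb R n T r n0 T0 hyp.
pose y0 := fun _ : 'I_n => m^-1.
pose F0 := F y0.
pose B := F0 - n%:R * (1 + ln m) + (1 + ln m).
have hlow u : 0 < u -> 1 + ln m <= m * u - ln u.
  move=> u0; have := @ln_le_lin m u m0 u0; lra.
have key w : (forall i, 0 < w i) -> F w <= F0 -> forall i, m * w i - ln (w i) <= B.
  move=> wp wF i.
  have s1 : \sum_j (m * w j - ln (w j)) <= F w.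
    rewrite /Fb sumrB -mulr_sumr; have := mlb w (fun j => ltW (wp j)); lra.
  have s2 : \sum_j (m * w j - ln (w j) - (1 + ln m)) =
      \sum_j (m * w j - ln (w j)) - n%:R * (1 + ln m).
    by rewrite sumrB sumr_const card_ord mulr_natl.
  have s3 := @le_sum_single R n (fun j => m * w j - ln (w j) - (1 + ln m)) i.
  have : m * w i - ln (w i) - (1 + ln m) <= \sum_j (m * w j - ln (w j) - (1 + ln m)).
    by apply: s3 => j; rewrite subr_ge0; exact: hlow.
  rewrite /B; lra.
pose eps := expR (- B).
pose M := 2 / m * (B - 1 - ln (m / 2)).
pose K := [set v : 'rV[R]_n | forall i, (fun _ : 'I_n => `[eps, M]%classic) i (v ord0 i)].
have inK w : (forall i, 0 < w i) -> F w <= F0 -> K (\row_i w i).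
  move=> wp wF i /=; rewrite mxE in_itv /=; exact: (@bounds m B (w i) m0 (wp i) (key w wp wF i)).
have y0p : forall i, 0 < y0 i by move=> i; rewrite /y0 invr_gt0.
have K0 : K !=set0 by exists (\row_i y0 i); apply: inK => //.
have cK : compact K by apply: rV_compact => i; exact: segment_compact.
have epsp : 0 < eps := expR_gt0 _.
have Kpos v : K v -> forall i, 0 < v ord0 i.
  move=> Kv i; have := Kv i; rewrite /= in_itv /= => /andP[h _]; exact: lt_le_trans h.
have cont : {within K, continuous (fun v : 'rV[R]_n => F (fun i => v ord0 i))}.
  apply: continuous_in_subspaceT => v /set_mem Kv.
  rewrite /F /Fb.
  have -> : (fun v : 'rV[R]_n => MAD r (fun i => v ord0 i) - \sum_i ln (v ord0 i)) =
    (fun v : 'rV[R]_n => MAD r (fun i => v ord0 i)) - (fun v => \sum_i ln (v ord0 i)) by [].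
  apply: continuousB; first exact: cont_MAD.
  apply: cont_sumS => i.
  have h1 := @coord_continuous R 1 n ord0 i v.
  have h2 := continuous_ln (Kpos v Kv i).
  have h := continuous_comp h1 h2.
  exact: h.
have [c /set_mem cK' cmin] := compact_EVT_min K0 cK cont.
exists (fun i => c ord0 i); split; first exact: Kpos.
have rowE w : (fun i => (\row_j w j) ord0 i) = w :> ('I_n -> R).
  by apply: funext => i; rewrite mxE.
have Fc0 : F (fun i => c ord0 i) <= F0.
  by have := cmin (\row_i y0 i); rewrite rowE; apply; apply/mem_set; apply: inK.
move=> w wp; case: (lerP (F w) F0) => wF.
  by have := cmin (\row_i w i); rewrite rowE; apply; apply/mem_set; exact: inK.
exact: le_trans Fc0 (ltW wF).
Qed.

End PartG.
Theorem proposition2 (R : realType) (n T : nat) (r : 'I_n -> 'I_T -> R) :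
  (0 < n)%N ->
  (forall x : 'I_n -> R, (forall i, 0 <= x i) ->
     (forall t : 'I_T, \sum_(i < n) (r i t - mu r i) * x i = 0) ->
     forall i, x i = 0) ->
  exists x : 'I_n -> R, MAD_RP r x /\
    forall y : 'I_n -> R, MAD_RP r y -> forall i, y i = x i.
Proof.
move=> n0 hyp.
have T0 : (0 < T)%N.
  case: T r hyp => [|T'] r' hyp' //.
  have := hyp' (fun _ => 1) (fun _ => ler01) (fun t => match t with Ordinal _ ht => False_ind _ (notF ht) end) (Ordinal n0).
  by move/eqP; rewrite oner_eq0.
have [y [yp ymin]] := @exists_min R n T r n0 T0 hyp.
have key := @variational R n T r y yp ymin.
have [x Hx] := @RP_from_y R n T r n0 y yp key.
exists x; split => // y' Hy' i.
exact: (@RP_unique R n T r n0 T0 hyp x y' Hx Hy' i).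
Qed.
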